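(* Let $n$ be a positive integer and let $F_R(n)$ be the $n\times n$ Fibonacci--Redheffer matrix. If $\lambda_1,\lambda_2,\ldots,\lambda_n$ are the $n$ (not necessarily distinct) eigenvalues of $F_R(n)$, then \[ \det(F_R(n))=\prod_{j=1}^{n}\lambda_j = n!_F\sum_{k=1}^{n}\frac{\mu(k)}{F_k}. \]
   Context: The Fibonacci numbers are $F_1=F_2=1$, $F_n=F_{n-1}+F_{n-2}$ for $n\ge 3$. The Fibonacci--Redheffer matrix $F_R(n)=[F_R(i,j)]_{i,j=1}^n$ is defined by $F_R(i,j)=1$ if $j=1$; $F_R(i,j)=F_i$ if $i\mid j$; and $F_R(i,j)=0$ otherwise (for $i=j=1$ both rules give $1$). The Fibonacci factorial is $n!_F=\prod_{i=1}^n F_i$. $\mu$ denotes the Möbius function: $\mu(1)=1$, $\mu(j)=0$ if $j$ has a repeated prime factor, and $\mu(j)=(-1)^k$ if $j$ is a product of $k$ distinct primes. *)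

(* Defs.v *)
From mathcomp Require Import all_boot all_order all_algebra all_field.
Set Implicit Arguments. Unset Strict Implicit. Unset Printing Implicit Defensive.
Import GRing.Theory Num.Theory.
Local Open Scope ring_scope.

Fixpoint fib (n : nat) : nat :=
  match n with
  | 0 => 0
  | 1 => 1
  | (m.+1 as k).+1 => fib k + fib m
  end.

Definition fibfact (n : nat) : nat := \prod_(1 <= i < n.+1) fib i.

(* Moebius function (mobius 0 = 0 by convention; never used at 0). *)
Definition mobius (n : nat) : int :=
  if n == 0%N then 0
  else if all (fun p => logn p n == 1%N) (primes n)
       then (-1) ^+ size (primes n) else 0.

(* Fibonacci--Redheffer matrix; index i : 'I_n stands for i+1. *)
Definition FR (n : nat) : 'M[algC]_n :=
  \matrix_(i < n, j < n)
    (if (j : nat) == 0%N then 1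
     else if (i.+1 %| j.+1)%N then (fib i.+1)%:R else 0).

(* Main.v *)
Require Import Defs.
From mathcomp Require Import all_boot all_order all_algebra all_field.
Import GRing.Theory Num.Theory.
Local Open Scope ring_scope.

Lemma mob_pdvd p e : prime p -> (p %| e)%N -> mobius (p * e) = 0.
Proof.
move=> pp pe.
have p0 := prime_gt0 pp.
case: (posnP e) => [->|e0]; first by rewrite muln0.
rewrite /mobius muln_eq0 (negbTE (lt0n_neq0 p0)) (negbTE (lt0n_neq0 e0)) /=.
suff -> : all (fun q => logn q (p * e) == 1%N) (primes (p * e)) = false by [].
apply/negbTE/allPn; exists p.
  by rewrite mem_primes pp muln_gt0 p0 e0 dvdn_mulr.
rewrite lognM // logn_prime // eqxx.
have : (0 < logn p e)%N by rewrite logn_gt0 mem_primes pp e0.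
by case: (logn p e).
Qed.

Lemma mob_pndvd p e : prime p -> ~~ (p %| e)%N -> (0 < e)%N ->
  mobius (p * e) = - mobius e.
Proof.
move=> pp pe e0.
have p0 := prime_gt0 pp.
have pne : p \notin primes e by rewrite mem_primes pp e0.
have Hperm : perm_eq (primes (p * e)) (p :: primes e).
  apply: uniq_perm; first exact: primes_uniq.
    by rewrite /= pne primes_uniq.
  by move=> q; rewrite primesM // primes_prime // !inE.
rewrite /mobius muln_eq0 (negbTE (lt0n_neq0 p0)) (negbTE (lt0n_neq0 e0)) /=.
rewrite (perm_all _ Hperm) (perm_size Hperm) /=.
rewrite lognM // logn_prime // eqxx (logn_coprime (m:=e)) ?prime_coprime //.
rewrite /= (@eq_in_all _ _ (fun q => logn q e == 1%N)); last first.
  move=> q qe; rewrite lognM // logn_prime //.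
  by have -> : (q == p) = false by apply/negbTE; apply: contraNneq pne => <-.
by case: all => //; rewrite exprS mulN1r.
Qed.

Lemma mob0 : mobius 0 = 0. Proof. by []. Qed.

Lemma mob_sum N m : (1 < m)%N -> (m < N.+1)%N ->
  \sum_(d < N.+1 | (d %| m)%N) mobius d = 0.
Proof.
move=> m1 mN.
have m0 : (0 < m)%N by apply: ltnW.
set p := pdiv m.
have pp : prime p by apply: pdiv_prime.
have pm : (p %| m)%N by apply: pdiv_dvd.
have p0 := prime_gt0 pp.
rewrite (bigID (fun d : 'I_N.+1 => (p %| d)%N)) /=.
rewrite (reindex_onto (fun j : 'I_N.+1 => inord (p * j) : 'I_N.+1)
          (fun i : 'I_N.+1 => inord (i %/ p))); last first.
  move=> i /andP[_ pi]; apply: val_inj => /=.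
  rewrite (@inordK N (i %/ p)); last exact: leq_ltn_trans (leq_div i p) (ltn_ord i).
  by rewrite mulnC divnK // inordK.
rewrite big_mkcond [X in _ + X]big_mkcond -big_split /=.
apply: big1 => j _.
case: (ltnP (p * j) N.+1) => hj.
  rewrite inordK // dvdn_mulr // andbT mulKn // inord_val eqxx andbT.
  case pj: (p %| j)%N.
    by rewrite mob_pdvd // andbF; case: ifP.
  have j0 : (0 < j)%N by case: (nat_of_ord j) pj => //; rewrite dvdn0.
  rewrite andbT Gauss_dvd ?prime_coprime ?pj // pm /=.
  by case: ifP => _; rewrite ?mob_pndvd ?pj // addNr.
have -> : (inord (p * j) : 'I_N.+1) = ord0.
  by apply: val_inj; rewrite /= /inord /insubd insubF // ltnNge hj.
rewrite /= dvd0n (gtn_eqF m0) /= add0r.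
case: ifP => // /andP[jm pj].
have : (p * j %| m)%N by rewrite Gauss_dvd ?prime_coprime // pm jm.
move=> /(dvdn_leq m0) h; have := leq_ltn_trans h mN.
by rewrite ltnNge hj.
Qed.

Lemma fib_gt0 n : (0 < fib n.+1)%N.
Proof. by elim: n => // n IH; rewrite [fib _]/= addn_gt0 IH. Qed.

Arguments fib : simpl never.

Lemma mob1 : mobius 1 = 1. Proof. by rewrite /mobius. Qed.

Lemma part1 n (A : 'M[algC]_n) (lam : 'I_n -> algC) :
  char_poly A = \prod_(j < n) ('X - (lam j)%:P) -> \det A = \prod_(j < n) lam j.
Proof.
move=> /(congr1 (fun q : {poly algC} => q`_0)).
rewrite char_poly_det -horner_coef0 horner_prod.
under eq_bigr do rewrite hornerD hornerX hornerN hornerC add0r.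
rewrite prodrN card_ord => /(congr1 (fun x => (-1) ^+ n * x)).
by rewrite !signrMK.
Qed.

Lemma part2 N :
  \det (FR N.+1) = (fibfact N.+1)%:R * \sum_(k < N.+1) (mobius k.+1)%:~R / (fib k.+1)%:R.
Proof.
set S := \sum_(k < N.+1) _.
set A := FR N.+1.
pose L : 'M[algC]_N.+1 := \matrix_(i, k) if i == ord0 then (mobius k.+1)%:~R / (fib k.+1)%:R else (i == k)%:R.
have Fn0 k : (fib k.+1)%:R != 0 :> algC by rewrite pnatr_eq0 -lt0n fib_gt0.
have detL : \det L = 1.
  rewrite -det_tr det_trig; last first.
    apply/forallP => i; apply/forallP => j; apply/implyP => ij.
    have j0 : j != ord0 by apply: contraTneq ij => ->.
    rewrite !mxE (negbTE j0).
    by rewrite (_ : (j == i) = false) //; apply/eqP => ji; rewrite ji ltnn in ij.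
  rewrite big_ord_recl !mxE eqxx mob1 /= divr1 mul1r.
  by apply: big1 => i _; rewrite !mxE /= eqxx.
have LA0 : (L *m A) ord0 ord0 = S.
  rewrite mxE; apply: eq_bigr => k _; rewrite !mxE /= mulr1; by [].
have LAj j : (L *m A) ord0 (lift ord0 j) = 0.
  rewrite mxE.
  have -> : \sum_j0 L ord0 j0 * A j0 (lift ord0 j) =
     (\sum_(d < N.+2 | (d %| j.+2)%N) mobius d)%:~R.
    rewrite rmorph_sum [RHS]big_mkcond [RHS]big_ord_recl /= add0r.
    apply: eq_bigr => k _; rewrite !mxE /= /bump /=.
    rewrite !add1n; case: ifP => _; last by rewrite mulr0.
    by rewrite divfK.
  by rewrite (@mob_sum N.+1 j.+2) // !ltnS ltn_ord.
have minorE : row' ord0 (col' ord0 (L *m A)) = row' ord0 (col' ord0 A).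
  apply/matrixP => i j; rewrite !mxE (bigD1 (lift ord0 i)) //= big1 ?addr0.
    by rewrite !mxE eq_sym (negbTE (neq_lift _ _)) eqxx mul1r.
  move=> k kn; rewrite !mxE eq_sym (negbTE (neq_lift _ _)).
  by rewrite eq_sym (negbTE kn) mul0r.
have detM : \det (row' ord0 (col' ord0 A)) = (fibfact N.+1)%:R.
  rewrite -det_tr det_trig; last first.
    apply/forallP => i; apply/forallP => j; apply/implyP => ij.
    rewrite !mxE !lift0 /=.
    case: ifP => [h|]; last by rewrite eqxx.
    by move: (dvdn_leq (ltn0Sn _) h); rewrite !ltnS leqNgt ij.
  rewrite /fibfact big_ltn // big_add1 /= big_add1 /= big_mkord natrM natr_prod.
  rewrite (_ : fib 1 = 1%N) // mul1r; apply: eq_bigr => i _.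
  rewrite !mxE !lift0 /=.
  by rewrite dvdnn.
have := det_mulmx L A; rewrite detL mul1r => <-.
rewrite (expand_det_row _ ord0) big_ord_recl.
rewrite big1 ?addr0; last by move=> j _; rewrite LAj mul0r.
by rewrite LA0 /cofactor minorE detM /= expr0 mul1r mulrC.
Qed.

Theorem theorem1 (n : nat) (lam : 'I_n -> algC) :
  (0 < n)%N ->
  char_poly (FR n) = \prod_(j < n) ('X - (lam j)%:P) ->
  \det (FR n) = \prod_(j < n) lam j /\
  \det (FR n) = (fibfact n)%:R * \sum_(k < n) (mobius k.+1)%:~R / (fib k.+1)%:R.
Proof.
case: n lam => // N lam _ Hc; split; first exact: part1 Hc.
exact: part2.
Qed.
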